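(* Let $m\in\mathbb{N}$, $A=\langle a\rangle\le\mathrm{Sym}(3)$ with $a=(1\,2\,3)$, $B=(\mathbb{Z}/3\mathbb{Z})^m$, and let $\omega=\omega_0\omega_1\omega_2\dots$ be a sequence of epimorphisms $\omega_i\colon B\to A$ with $\bigcap_{i\ge k}\ker(\omega_i)=\{1\}$ for every $k\in\mathbb{N}$. Let $l\in\mathbb{N}$ be the smallest integer such that $\bigcap_{i=0}^{l}\ker(\omega_i)=\{1\}$. Then there exists a constant $C_l\in\mathbb{N}$ such that $|\mathcal{I}_\infty^\omega(n)|\le C_l\, n^{\frac{3^{l+2}-1}{2}}$ for all integers $n\ge 1$.
   Context: $T_3$ is the $3$-regular rooted tree; elements of $\mathrm{Sym}(3)$ act as rooted automorphisms $\tau(xw)=\tau(x)w$; for $g$ fixing the first level, $g=(g_1,g_2,g_3)$ lists the restrictions of $g$ to the three subtrees below the root, and every $g\in\mathrm{Aut}(T_3)$ is uniquely $g=(g_1,g_2,g_3)\tau$ with $\tau\in\mathrm{Sym}(3)$. Let $\sigma$ be the left shift on sequences. Define recursively $\beta_\omega\colon B\to\mathrm{Aut}(T_3)$ by $\beta_\omega(b)=(\omega_0(b),1,\beta_{\sigma(\omega)}(b))$, let $B_\omega=\beta_\omega(B)$ and $G_\omega=\langle A,B_\omega\rangle$. Equip $G_\omega$ with the word pseudonorm $|\cdot|_\omega$: $|g|_\omega$ is the minimum of $\sum_i|s_i|$ over all expressions $g=s_1\cdots s_k$ with $s_i\in A\cup B_\omega$, where elements of $A$ have length $0$ and nontrivial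 elements of $B_\omega$ have length $1$. Every $g\in G_{\sigma^\nu(\omega)}$ can be written $g=(g_1,g_2,g_3)\tau$ with $g_i\in G_{\sigma^{\nu+1}(\omega)}$, $\tau\in A$. Incompressible elements: set $\mathcal{I}_0^{\sigma^\nu(\omega)}=G_{\sigma^\nu(\omega)}$ and recursively $\mathcal{I}_k^{\sigma^\nu(\omega)}$ is the set of $g=(g_1,g_2,g_3)\tau\in G_{\sigma^\nu(\omega)}$ with $g_1,g_2,g_3\in\mathcal{I}_{k-1}^{\sigma^{\nu+1}(\omega)}$ and $\sum_{i=1}^3|g_i|_{\sigma^{\nu+1}(\omega)}=|g|_{\sigma^\nu(\omega)}$; then $\mathcal{I}_\infty^\omega=\bigcap_{k\ge1}\mathcal{I}_k^\omega$, and $\mathcal{I}_\infty^\omega(n)$ is the set of elements of $\mathcal{I}_\infty^\omega$ of length $|\cdot|_\omega$ equal to $n$. *)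

(* Defs.v *)
From Stdlib Require Import ClassicalEpsilon.
From mathcomp Require Import all_boot all_order all_algebra.
Set Implicit Arguments. Unset Strict Implicit. Unset Printing Implicit Defensive.
Import GRing.Theory.
Local Open Scope ring_scope.

(* Vertices of the 3-regular rooted tree T_3: finite words over the alphabet
   {0,1,2} (= the paper's {1,2,3}), represented by 'Z_3. *)
Definition word := seq 'Z_3.

(* Tree maps are functions on words; equality of automorphisms is extensional
   equality (=1). *)
Definition tmap := word -> word.

Definition Bgrp (m : nat) := 'rV['Z_3]_m.

(* A = <a> <= Sym(3), a = (1 2 3), identified with Z/3Z via a^k <-> k.
   rotw k is the rooted automorphism a^k : x w |-> (x + k) w. *)
Definition rotw (k : 'Z_3) (w : word) : word :=
  match w with [::] => [::] | x :: w' => (x + k) :: w' end.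

Definition omseq (m : nat) := nat -> Bgrp m -> 'Z_3.

Definition shift m (om : omseq m) : omseq m := fun i => om i.+1.

(* beta_omega(b) = (omega_0(b), 1, beta_{sigma omega}(b)) *)
Fixpoint beta m (om : omseq m) (b : Bgrp m) (w : word) : word :=
  match w with
  | [::] => [::]
  | x :: w' =>
      if x == 0 then x :: rotw (om 0%N b) w'
      else if x == 1 then x :: w'
      else x :: beta (shift om) b w'
  end.

Inductive gen (m : nat) := GA of 'Z_3 | GB of Bgrp m.

Definition gact m (om : omseq m) (s : gen m) : tmap :=
  match s with GA k => rotw k | GB b => beta om b end.

Fixpoint geval m (om : omseq m) (L : seq (gen m)) : tmap :=
  match L with
  | [::] => id
  | s :: L' => fun w => gact om s (geval om L' w)
  end.

Definition trivialB m (om : omseq m) (b : Bgrp m) : Prop :=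
  forall w, beta om b w = w.

Definition glen m (om : omseq m) (s : gen m) : nat :=
  match s with
  | GA _ => 0%N
  | GB b => if excluded_middle_informative (trivialB om b) then 0%N else 1%N
  end.

Definition cost m (om : omseq m) (L : seq (gen m)) : nat :=
  sumn (map (glen om) L).

Definition inG m (om : omseq m) (g : tmap) : Prop :=
  exists L, geval om L =1 g.

Definition wnorm m (om : omseq m) (g : tmap) (n : nat) : Prop :=
  (exists L, geval om L =1 g /\ cost om L = n) /\
  (forall L, geval om L =1 g -> (n <= cost om L)%N).

(* restriction (section) of g to the subtree below the first-level vertex x:
   g(x w) = g(x) g|_x(w) *)
Definition section (g : tmap) (x : 'Z_3) : tmap :=
  fun w => behead (g (x :: w)).

Fixpoint incomp (k : nat) m (om : omseq m) (g : tmap) : Prop :=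
  match k with
  | 0%N => inG om g
  | k'.+1 =>
      inG om g /\
      (forall x, incomp k' (shift om) (section g x)) /\
      exists n n0 n1 n2,
        [/\ wnorm om g n,
            wnorm (shift om) (section g 0) n0,
            wnorm (shift om) (section g 1) n1,
            wnorm (shift om) (section g 2) n2 &
            (n0 + n1 + n2)%N = n]
  end.

Definition incomp_inf m (om : omseq m) (g : tmap) : Prop :=
  forall k, (1 <= k)%N -> incomp k om g.

Definition incomp_inf_n m (om : omseq m) (n : nat) (g : tmap) : Prop :=
  incomp_inf om g /\ wnorm om g n.

(* "the set {g | P g} has at most N elements" (elements counted up to
   extensional equality of tree maps) *)
Definition card_le (P : tmap -> Prop) (N : nat) : Prop :=
  forall s : seq tmap,
    (forall i, (i < size s)%N -> P (nth id s i)) ->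
    (forall i j, (i < j < size s)%N -> ~ (nth id s i =1 nth id s j)) ->
    (size s <= N)%N.

(* Main.v *)
Require Import Defs.
From Stdlib Require Import ClassicalEpsilon Classical.
From mathcomp Require Import all_boot all_order all_algebra zify ring.
Set Implicit Arguments. Unset Strict Implicit. Unset Printing Implicit Defensive.
Import GRing.Theory.
Local Open Scope ring_scope.


Section Sem.
Variable m : nat.
Implicit Types (om : omseq m) (b : Bgrp m).

Definition homP om := forall i (x y : Bgrp m), om i (x + y) = om i x + om i y.

Lemma homP_shift om : homP om -> homP (shift om).
Proof. by move=> h i x y; apply: h. Qed.

Lemma rotw0 w : rotw 0 w = w.
Proof. by case: w => [|x w] //=; rewrite addr0. Qed.

Lemma rotwD a c w : rotw a (rotw c w) = rotw (c + a) w.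
Proof. by case: w => [|x w] //=; rewrite addrA. Qed.

Lemma rotwK a w : rotw (- a) (rotw a w) = w.
Proof. by rewrite rotwD subrr rotw0. Qed.

Lemma betaD om b b' w : homP om ->
  beta om b (beta om b' w) = beta om (b + b') w.
Proof.
elim: w om => [|x w IH] om h //=.
case: ifP => [/eqP->|h0] /=; first by rewrite rotwD h addrC.
case: ifP => [/eqP->|h1] /=; first by [].
by rewrite h0 h1 IH //; apply: homP_shift.
Qed.

Definition letter := ('Z_3 * Bgrp m)%type.
Definition tl om (l : letter) : tmap := fun w => rotw l.1 (beta om l.2 (rotw (- l.1) w)).
Definition evalW om (W : seq letter) (s : 'Z_3) : tmap :=
  fun w => foldr (fun l v => tl om l v) (rotw s w) W.

Lemma beta_cons om b x v : beta om b (x :: v) =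
  x :: (if x == 0 then rotw (om 0%N b) v else if x == 1 then v else beta (shift om) b v).
Proof. by rewrite /=; case: ifP => //; case: ifP. Qed.

Lemma tl_cons om l y v : tl om l (y :: v) =
  y :: (if y - l.1 == 0 then rotw (om 0%N l.2) v else if y - l.1 == 1 then v
        else beta (shift om) l.2 v).
Proof. by rewrite /tl /=; case: ifP => _; [|case: ifP => _]; rewrite /= subrK. Qed.

Fixpoint sectL om (x R : 'Z_3) (W : seq letter) : seq letter :=
  match W with
  | [::] => [::]
  | l :: W' => if x - l.1 == 0 then sectL om x (R + om 0%N l.2) W'
               else if x - l.1 == 1 then sectL om x R W'
               else (R, l.2) :: sectL om x R W'
  end.

Fixpoint Rtot om (x R : 'Z_3) (W : seq letter) : 'Z_3 :=
  match W with
  | [::] => R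
  | l :: W' => if x - l.1 == 0 then Rtot om x (R + om 0%N l.2) W'
               else Rtot om x R W'
  end.

Lemma evalW_head om W y w : evalW om W 0 (y :: w) = y :: behead (evalW om W 0 (y :: w)).
Proof.
elim: W => [|l W IH] /=; first by rewrite ?addr0.
by rewrite IH tl_cons.
Qed.

Lemma sect_evalW om W R y w :
  rotw R (behead (evalW om W 0 (y :: w))) =
  evalW (shift om) (sectL om y R W) (Rtot om y R W) w.
Proof.
elim: W R => [|l W IH] R /=; first by [].
rewrite evalW_head tl_cons /=.
case: ifP => h0; first by rewrite rotwD IH [om 0%N _ + R]addrC.
case: ifP => h1; first by rewrite -IH.
by rewrite /= -IH /tl /= rotwK.
Qed.

Lemma section_evalW om W s x :
  section (evalW om W s) x =1
  evalW (shift om) (sectL om (x + s) 0 W) (Rtot om (x + s) 0 W).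
Proof.
move=> w; rewrite /section -sect_evalW rotw0.
suff -> : evalW om W s (x :: w) = evalW om W 0 ((x + s) :: w) by [].
by rewrite /evalW /= addr0.
Qed.

Lemma tl_merge om c b b' v : homP om ->
  tl om (c, b) (tl om (c, b') v) = tl om (c, b + b') v.
Proof. by move=> h; rewrite /tl /= rotwK betaD. Qed.

Lemma evalW_merge om W1 W2 c b b' s : homP om ->
  evalW om (W1 ++ (c, b) :: (c, b') :: W2) s =1 evalW om (W1 ++ (c, b + b') :: W2) s.
Proof.
move=> h w; elim: W1 => [|l W1 IH] /=; first by rewrite tl_merge.
by rewrite IH.
Qed.

Lemma geval_cat om L1 L2 w : geval om (L1 ++ L2) w = geval om L1 (geval om L2 w).
Proof. by elim: L1 => [|s L1 IH] //=; rewrite IH. Qed.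

Fixpoint fromNF (W : seq letter) (s : 'Z_3) : seq (gen m) :=
  match W with
  | [::] => [:: GA m s]
  | l :: W' => GA m l.1 :: GB l.2 :: GA m (- l.1) :: fromNF W' s
  end.

Lemma geval_fromNF om W s : geval om (fromNF W s) =1 evalW om W s.
Proof. by move=> w; elim: W => [|l W IH] //=; rewrite IH. Qed.

Lemma glen_le1 om g : (glen om g <= 1)%N.
Proof. by case: g => //= b; case: excluded_middle_informative. Qed.

Lemma cost_fromNF om W s : (cost om (fromNF W s) <= size W)%N.
Proof.
elim: W => [|l W IH] //=; rewrite /cost /= -/(cost om _) !add0n.
have := glen_le1 om (GB l.2); rewrite addnC; move=> h.
by rewrite -(addn1 (size W)) leq_add.
Qed.

Fixpoint toNF om (L : seq (gen m)) : seq letter * 'Z_3 :=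
  match L with
  | [::] => ([::], 0)
  | GA k :: L' => let p := toNF om L' in ([seq (l.1 + k, l.2) | l <- p.1], p.2 + k)
  | GB b :: L' => let p := toNF om L' in
       (if glen om (GB b) == 0%N then p.1 else (0, b) :: p.1, p.2)
  end.

Lemma rotw_evalW om W s k w :
  rotw k (evalW om W s w) = evalW om [seq (l.1 + k, l.2) | l <- W] (s + k) w.
Proof.
elim: W => [|l W IH] /=; first by rewrite rotwD.
rewrite -IH /tl /= !rotwD; congr (rotw _ (beta _ _ (rotw _ _))).
by rewrite opprD addrCA subrr addr0.
Qed.

Lemma toNF_geval om L : geval om L =1 evalW om (toNF om L).1 (toNF om L).2.
Proof.
move=> w; elim: L => [|g L IH] /=; first by rewrite rotw0.
case: g => [k|b] /=; first by rewrite IH rotw_evalW.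
case: ifP => /eqP h /=; rewrite IH //; last by rewrite /tl /= oppr0 !rotw0.
by move: h; case: excluded_middle_informative => [tb|] // _; apply: tb.
Qed.

Lemma size_toNF om L : (size (toNF om L).1 <= cost om L)%N.
Proof.
elim: L => [|g L IH] //=; case: g => [k|b] /=; rewrite /cost /= -/(cost om _).
  by rewrite size_map.
case: ifP => /eqP h /=; first by rewrite h.
by move: h; case: excluded_middle_informative => //= _ _; rewrite add1n ltnS.
Qed.

End Sem.


Definition inJ (x c : 'Z_3) := (x - c != 0) && (x - c != 1).

Definition nJ (c x : 'Z_3) : nat := inJ x c.
Lemma inJ3 (s c : 'Z_3) : (nJ c (0 + s)%R + nJ c (1 + s)%R + nJ c (2 + s)%R)%N = 1%N.
Proof.
by move: s c; do 2 case=> [[|[|[|//]]] ?].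
Qed.

Lemma Z3_cases (x : 'Z_3) : [\/ x = 0, x = 1 | x = 2].
Proof. by case: x => [[|[|[|//]]] ?]; [constructor 1|constructor 2|constructor 3]; apply: val_inj. Qed.

Definition noadj (s : seq 'Z_3) :=
  forall s1 s2 x y, s = s1 ++ x :: y :: s2 -> x != y.

Section Adm.
Variable m : nat.
Implicit Types (om : omseq m) (W : seq (letter m)).

Fixpoint adm k om W : Prop :=
  if k is k'.+1 then noadj (map fst W) /\
     forall y, adm k' (shift om) (sectL om y 0 W)
  else True.

Lemma adm_le k om W : adm k.+1 om W -> adm k om W.
Proof.
elim: k om W => [|k IH] om W //= [h1 h2]; split => // y.
by apply: IH; apply: h2.
Qed.

Lemma adm_leq k k' om W : (k <= k')%N -> adm k' om W -> adm k om W.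
Proof.
move=> /subnK <-; elim: (k' - k)%N => [|d IH] //= h.
by apply: IH; apply: adm_le.
Qed.

Lemma map_split (T U : Type) (f : T -> U) (V : seq T) s1 s2 x y :
  map f V = s1 ++ x :: y :: s2 ->
  exists V1 a b V2, [/\ V = V1 ++ a :: b :: V2, f a = x & f b = y].
Proof.
elim: s1 V => [|z s1 IH] [|a V] //=.
  case: V => [|b V] //= [h1 h2 _]; by exists [::], a, b, V.
case=> _ /IH [V1 [a' [b' [V2 [-> h1 h2]]]]].
by exists (a :: V1), a', b', V2.
Qed.

Lemma wnorm_uniq om g n n' : wnorm om g n -> wnorm om g n' -> n = n'.
Proof.
move=> [[L [h1 h2]] h3] [[L' [h1' h2']] h3'].
apply/eqP; rewrite eqn_leq; apply/andP; split.
  by rewrite -h2'; apply: h3.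
by rewrite -h2; apply: h3'.
Qed.

Lemma size_sectL om y R W :
  size (sectL om y R W) = count (fun l : letter m => inJ y l.1) W.
Proof.
elim: W R => [|l W IH] R //=; rewrite /inJ.
case: ifP => h0 /=; rewrite ?IH //; case: ifP => h1 /=; rewrite ?IH //.
Qed.

Lemma size_sect3 om (s R0 R1 R2 : 'Z_3) W :
  (size (sectL om (0 + s)%R R0 W) + size (sectL om (1 + s)%R R1 W)
   + size (sectL om (2 + s)%R R2 W))%N = size W.
Proof.
rewrite !size_sectL; elim: W => [|l W IH] //=.
have := inJ3 s l.1; rewrite /nJ => h.
lia.
Qed.

Lemma wnorm_le om g W s : (forall w, evalW om W s w = g w) ->
  forall n, wnorm om g n -> (n <= size W)%N.
Proof.
move=> hW n [_ h]; apply: leq_trans (cost_fromNF om W s).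
by apply: h => w; rewrite geval_fromNF hW.
Qed.

Lemma adm_of_incomp om k : homP om -> forall g W s,
  incomp k om g -> wnorm om g (size W) -> evalW om W s =1 g -> adm k om W.
Proof.
elim: k om => [|k IH] om hom g W s //= [hG [hsec [n [n0 [n1 [n2 [hn hn0 hn1 hn2 hsum]]]]]]] hw hW.
have en := wnorm_uniq hn hw; subst n.
split.
  move=> s1 s2 x y hs.
  have [W1 [[c b] [[c' b'] [W2 [EW /= e1 e2]]]]] := map_split hs.
  rewrite EW in hW hw.
  apply/negP => /eqP exy; subst x y; subst c'.
  have hW' : evalW om (W1 ++ (c, b + b') :: W2) s =1 g.
    by move=> w; rewrite -evalW_merge // hW.
  have := wnorm_le hW' hw; rewrite !size_cat /=; lia.
pose SW x := sectL om (x + s) 0 W.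
have hS x : evalW (shift om) (SW x) (Rtot om (x + s) 0 W) =1 section g x.
  move=> w; rewrite -section_evalW /section.
  by rewrite hW.
have le0 := wnorm_le (hS 0) hn0.
have le1 := wnorm_le (hS 1) hn1.
have le2 := wnorm_le (hS 2) hn2.
have := size_sect3 om s 0 0 0 W; rewrite -/(SW 0) -/(SW 1) -/(SW 2) => e.
have e0 : n0 = size (SW 0) by lia.
have e1 : n1 = size (SW 1) by lia.
have e2 : n2 = size (SW 2) by lia.
move=> y.
have -> : y = (y - s) + s by rewrite subrK.
apply: (IH _ (homP_shift hom) (section g (y - s)) _ (Rtot om (y - s + s) 0 W)).
- by apply: hsec.
- have : [\/ y - s = 0, y - s = 1 | y - s = 2] by apply: Z3_cases.
  by case=> ->; [rewrite -e0 | rewrite -e1 | rewrite -e2].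
- exact: hS.
Qed.

End Adm.


Fixpoint mkpat (c : 'Z_3) (a n : nat) : seq 'Z_3 :=
  if n is n'.+1 then c :: (if a is a'.+1 then mkpat (c - 1) a' n' else mkpat (c + 1) 0 n')
  else [::].

Lemma mkpatS c a n : mkpat c a n.+1 =
  c :: (if a is a'.+1 then mkpat (c - 1) a' n else mkpat (c + 1) 0 n).
Proof. by []. Qed.

Lemma size_mkpat c a n : size (mkpat c a n) = n.
Proof. by elim: n c a => [|n IH] c [|a] //; rewrite mkpatS [size _]/size -/(size _) IH. Qed.

Lemma mkpat_min c a n : mkpat c a n = mkpat c (minn a n) n.
Proof.
elim: n c a => [|n IH] c [|a]; rewrite ?minn0 ?min0n //.
by rewrite minnSS mkpatS [in RHS]mkpatS IH.
Qed.

Lemma noadj_nth (s : seq 'Z_3) : noadj s -> forall i, (i.+1 < size s)%N ->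
  nth 0 s i != nth 0 s i.+1.
Proof.
move=> h i hi; apply: (h (take i s) (drop i.+2 s)).
have h1 : (i < size s)%N by apply: ltnW.
by rewrite -{1}(cat_take_drop i s) (drop_nth 0 h1) (drop_nth 0 hi).
Qed.

Lemma z3_sub (x y : 'Z_3) : x != y -> x = y + 1 \/ x = y - 1.
Proof.
move=> hxy; have e2 : (2 : 'Z_3) = -1 by apply: val_inj.
case: (Z3_cases (x - y)) => h.
- by move: hxy; rewrite -subr_eq0 h.
- by left; rewrite -h addrC subrK.
- by right; rewrite -e2 -h addrC subrK.
Qed.

Lemma pattern (cl : seq 'Z_3) :
  (forall i, (i.+1 < size cl)%N -> nth 0 cl i != nth 0 cl i.+1) ->
  (forall i, (i.+2 < size cl)%N ->
     ~ (nth 0 cl i.+2 = nth 0 cl i /\ nth 0 cl i.+1 = nth 0 cl i + 1)) ->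
  exists c0 a, cl = mkpat c0 a (size cl).
Proof.
elim: cl => [|y cl IH] h1 h2; first by exists 0, 0%N.
case: cl IH h1 h2 => [|z cl] IH h1 h2; first by exists y, 0%N.
have [c0 [a ea]] : exists c0 a, z :: cl = mkpat c0 a (size (z :: cl)).
  apply: IH => [i hi|i hi]; first by apply: (h1 i.+1).
  by apply: (h2 i.+1).
have ez : z = c0 by move: ea; case: a => [|a] [].
subst z.
have hs : size [:: y, c0 & cl] = (size (c0 :: cl)).+1 by [].
have : y != c0 := h1 0%N isT.
move=> /z3_sub [ey|ey].
- exists y, a.+1; rewrite hs mkpatS ey addrK -ey -ea //.
- case: a ea => [|a] ea.
    by exists y, 0%N; rewrite hs mkpatS ey subrK -ea.
  clear IH; case: cl ea h1 h2 hs => [|w cl] ea h1 h2 hs.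
    by exists y, 0%N; rewrite hs mkpatS ey subrK.
  exfalso; apply: (h2 0%N isT).
  have ew : w = c0 - 1 by move: ea; rewrite [size _]/= mkpatS mkpatS => -[].
  by rewrite /= ew ey subrK.
Qed.

Section Comb.
Variable m : nat.
Implicit Types (om : omseq m) (W : seq (letter m)).

Definition dl : letter m := (0, 0).

Definition Rp om (x : 'Z_3) W (j : nat) : 'Z_3 :=
  \sum_(l <- take j W | x - l.1 == 0) om 0%N l.2.

Lemma nth_fst W j : nth 0 (map fst W) j = (nth dl W j).1.
Proof. by elim: W j => [|l W IH] [|j] //=. Qed.

Lemma sectL_eq om x R W : sectL om x R W =
  [seq (R + Rp om x W j, (nth dl W j).2) | j <- iota 0 (size W) & inJ x (nth dl W j).1].
Proof.
elim: W R => [|l W IH] R /=; first by [].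
have -> : iota 1 (size W) = map (addn 1) (iota 0 (size W)) by rewrite -iotaDl.
rewrite filter_map.
set F := filter _ (iota 0 (size W)).
have ef : F = [seq i <- iota 0 (size W) | inJ x (nth dl W i).1].
  by apply: eq_filter => i.
rewrite ef /inJ.
have hR j : Rp om x (l :: W) j.+1 = (if x - l.1 == 0 then om 0%N l.2 else 0) + Rp om x W j.
  by rewrite /Rp take_cons big_cons; case: ifP => _ //; rewrite add0r.
case: ifP => h0.
  rewrite IH /= -map_comp; apply: eq_map => j /=; rewrite add1n hR h0 addrA //.
case: ifP => h1.
  rewrite IH /= -map_comp; apply: eq_map => j /=; rewrite add1n hR h0 add0r //.
rewrite IH /= -map_comp /Rp take0 big_nil addr0; congr (_ :: _); apply: eq_map => j /=.
by rewrite -/(Rp om x (l :: W) j.+1) hR h0 add0r.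
Qed.

Lemma Rp_step om x W j : (j < size W)%N ->
  Rp om x W j.+1 = Rp om x W j +
     (if x - (nth dl W j).1 == 0 then om 0%N (nth dl W j).2 else 0).
Proof.
move=> hj; rewrite /Rp (take_nth dl hj) -cats1 big_cat /= big_cons big_nil.
by case: ifP; rewrite addr0.
Qed.

End Comb.


Definition sandw (cl : seq 'Z_3) (i : nat) : bool :=
  let c := nth 0 cl i in
  [&& (0 < i)%N, (i.+2 < size cl)%N, nth 0 cl i.-1 == c + 1,
      nth 0 cl i.+1 == c - 1 & nth 0 cl i.+2 == c + 1]
  || [&& (1 < i)%N, (i.+1 < size cl)%N, nth 0 cl (i - 2) == c + 1,
      nth 0 cl i.-1 == c - 1 & nth 0 cl i.+1 == c + 1].

Lemma nth_mkpat_dec c a n j : (j <= a)%N -> (j < n)%N ->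
  nth 0 (mkpat c a n) j = c - j%:R.
Proof.
elim: n c a j => [|n IH] c a [|j] //= hja hjn; first by rewrite subr0.
case: a hja => [|a] // hja.
rewrite IH //; ring.
Qed.

Lemma nth_mkpat_inc c a n j : (a <= j)%N -> (j < n)%N ->
  nth 0 (mkpat c a n) j = c - a%:R + (j - a)%:R.
Proof.
elim: n c a j => [|n IH] c a [|j] //= haj hjn.
  by case: a haj => // _; rewrite subr0 addr0.
case: a haj => [|a] haj.
  by rewrite IH // !subn0 subr0; ring.
rewrite IH // subSS; ring.
Qed.

Lemma Z3_three : (3%:R : 'Z_3) = 0.
Proof. by apply: val_inj. Qed.

Lemma sandw_mkpat c a n i : (i < n)%N ->
  ~~ (i \in [:: 0; a.-1; a; a.+1; n - 2; n - 1]%N) -> sandw (mkpat c a n) i.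
Proof.
move=> hin; rewrite !inE.
case/norP => /eqP h0; case/norP => /eqP h1; case/norP => /eqP h2.
case/norP => /eqP h3; case/norP => /eqP h4 /eqP h5.
have hsz := size_mkpat c a n.
rewrite /sandw hsz.
have [hd|hi] : (i.+2 <= a)%N \/ (a.+2 <= i)%N by lia.
- apply/orP; left; rewrite !nth_mkpat_dec; try lia.
  have hi2 : (0 < i)%N by lia.
  have hi3 : (i.+2 < n)%N by lia.
  rewrite hi2 hi3 /=.
  case: i hi2 {h0 h1 h2 h3 h4 h5 hd hin hi3} => [//|k] _.
  apply/and3P; split; apply/eqP.
  + by rewrite /=; ring.
  + by ring.
  + have -> : c - (k.+3)%:R = c - (k.+1)%:R + 1 - 3%:R by ring.
    by rewrite Z3_three subr0.
- apply/orP; right; rewrite !nth_mkpat_inc; try lia.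
  have hi2 : (1 < i)%N by lia.
  have hi3 : (i.+1 < n)%N by lia.
  rewrite hi2 hi3 /=.
  have [e ->] : exists e, i = (a + e.+2)%N by exists (i - a.+2)%N; lia.
  have -> : (a + e.+2 - 2 - a = e)%N by lia.
  have -> : ((a + e.+2).-1 - a = e.+1)%N by lia.
  have -> : ((a + e.+2).+1 - a = e.+3)%N by lia.
  have -> : ((a + e.+2) - a = e.+2)%N by lia.
  apply/and3P; split; apply/eqP.
  + have -> : c - a%:R + e%:R = c - a%:R + (e.+2)%:R + 1 - 3%:R by ring.
    by rewrite Z3_three subr0.
  + by ring.
  + by ring.
Qed.

Lemma count_nsandw c a n :
  (count (fun i => ~~ sandw (mkpat c a n) i) (iota 0 n) <= 6)%N.
Proof.
rewrite -size_filter.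
have -> : 6%N = size [:: 0; a.-1; a; a.+1; n - 2; n - 1]%N by [].
apply: uniq_leq_size; first by rewrite filter_uniq // iota_uniq.
move=> i; rewrite mem_filter mem_iota add0n => /andP [hs /andP [_ hin]].
apply/negPn/negP => hn; move: hs; rewrite (sandw_mkpat c hin hn) //.
Qed.

Lemma z3_facts (c : 'Z_3) :
  [/\ (c - (c + 1) == 0) = false, (c - (c - 1) == 0) = false,
      inJ c (c + 1) & (c - c == 0)].
Proof. by move: c; case=> [[|[|[|//]]] ?]. Qed.

Section Det.
Variable m : nat.
Implicit Types (om : omseq m) (W : seq (letter m)).

Definition amb om W : seq 'Z_3 :=
  [seq om 0%N (nth (dl m) W i).2 | i <- iota 0 (size W) & ~~ sandw (map fst W) i].

Definition rfun om W j : 'Z_3 := om 0%N (nth (dl m) W j).2.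
Definition fR om x W j : 'Z_3 :=
  if x - (nth (dl m) W j).1 == 0 then rfun om W j else 0.

Lemma Rp3 om x W k : (k.+2 < size W)%N ->
  Rp om x W k.+3 = Rp om x W k + fR om x W k + fR om x W k.+1 + fR om x W k.+2.
Proof. by move=> h; rewrite !Rp_step //; lia. Qed.

Lemma map_fst_sectL om x W :
  map fst (sectL om x 0 W) =
  [seq Rp om x W j | j <- iota 0 (size W) & inJ x (nth 0 (map fst W) j)].
Proof.
have ef : [seq j <- iota 0 (size W) | inJ x (nth (dl m) W j).1] =
          [seq j <- iota 0 (size W) | inJ x (nth 0 (map fst W) j)].
  by apply: eq_filter => j; rewrite nth_fst.
by rewrite sectL_eq -map_comp ef; apply: eq_map => j /=; rewrite add0r.
Qed.

Lemma determ_r om W W' :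
  map fst W = map fst W' ->
  (forall x, map fst (sectL om x 0 W) = map fst (sectL om x 0 W')) ->
  amb om W = amb om W' ->
  forall i, (i < size W)%N -> rfun om W i = rfun om W' i.
Proof.
move=> ecl hsec hamb i hi.
have esz : size W = size W' by rewrite -(size_map fst W) ecl size_map.
have enth j : (nth (dl m) W j).1 = (nth (dl m) W' j).1 by rewrite -!nth_fst ecl.
case hs: (sandw (map fst W) i); last first.
  move: hamb; rewrite /amb -esz -ecl => /eq_in_map h.
  by apply: h; rewrite mem_filter hs mem_iota /=.
move: hs; rewrite /sandw; move eqx: (nth 0 (map fst W) i) => x hs.
have hR : {in [seq j <- iota 0 (size W) | inJ x (nth 0 (map fst W) j)],
             Rp om x W =1 Rp om x W'}.
  by apply/eq_in_map; rewrite -!map_fst_sectL hsec map_fst_sectL -ecl -esz.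
have [f1 f2 f3 f4] := z3_facts x.
have fRW (V : seq (letter m)) j : nth 0 (map fst V) j = x + 1 -> fR om x V j = 0.
  by rewrite /fR nth_fst => ->; rewrite f1.
have fRW' (V : seq (letter m)) j : nth 0 (map fst V) j = x - 1 -> fR om x V j = 0.
  by rewrite /fR nth_fst => ->; rewrite f2.
have fRi (V : seq (letter m)) j : nth 0 (map fst V) j = x -> fR om x V j = rfun om V j.
  by rewrite /fR nth_fst => ->; rewrite f4.
have inF j : (j < size W)%N -> nth 0 (map fst W) j = x + 1 ->
   j \in [seq j <- iota 0 (size W) | inJ x (nth 0 (map fst W) j)].
  by move=> hj e; rewrite mem_filter e f3 mem_iota.
move: hs; case/orP.
- case/and5P => h0 h2 /eqP e1 /eqP e2 /eqP e3.
  rewrite size_map in h2.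
  case: i eqx hi h0 h2 e1 e2 e3 => [//|k] eqx hi _ h2 e1 e2 e3.
  rewrite /= in e1.
  have h2'' : (k.+2 < size W)%N by exact: ltnW.
  have h2' : (k.+2 < size W')%N by rewrite -esz.
  have := hR k.+3; rewrite inF // => /(_ isT).
  rewrite (Rp3 _ _ h2'') (Rp3 _ _ h2') (hR k) ?inF //; last by apply: ltnW; apply: ltnW.
  have e1' : nth 0 (map fst W') k = x + 1 by rewrite -ecl.
  have e2' : nth 0 (map fst W') k.+2 = x - 1 by rewrite -ecl.
  have eqx' : nth 0 (map fst W') k.+1 = x by rewrite -ecl.
  rewrite (fRW _ _ e1) (fRW _ _ e1') (fRW' _ _ e2) (fRW' _ _ e2') (fRi _ _ eqx) (fRi _ _ eqx').
  by rewrite !addr0 => /addrI.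
- case/and5P => h0 h2 /eqP e1 /eqP e2 /eqP e3.
  rewrite size_map in h2.
  case: i eqx hi h0 h2 e1 e2 e3 => [//|[//|k]] eqx hi _ h2 e1 e2 e3.
  rewrite /= subn2 /= in e1 e2.
  have h2' : (k.+2 < size W')%N by rewrite -esz.
  have h2'' : (k.+2 < size W)%N by [].
  have := hR k.+3; rewrite inF // => /(_ isT).
  rewrite (Rp3 _ _ h2'') (Rp3 _ _ h2') (hR k) ?inF //; last by apply: ltnW; apply: ltnW.
  have e1' : nth 0 (map fst W') k = x + 1 by rewrite -ecl.
  have e2' : nth 0 (map fst W') k.+1 = x - 1 by rewrite -ecl.
  have eqx' : nth 0 (map fst W') k.+2 = x by rewrite -ecl.
  rewrite (fRW _ _ e1) (fRW _ _ e1') (fRW' _ _ e2) (fRW' _ _ e2') (fRi _ _ eqx) (fRi _ _ eqx').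
  by rewrite !addr0 => /addrI.
Qed.

End Det.


Lemma fchoice (A : Type) (P : nat -> A -> Prop) :
  (forall n, exists x, P n x) -> exists f, forall n, P n (f n).
Proof.
move=> h; exists (fun n => proj1_sig (constructive_indefinite_description _ (h n))).
by move=> n; exact: proj2_sig (constructive_indefinite_description _ (h n)).
Qed.

Lemma cover_inj (A : Type) (B C : eqType) (P : A -> Prop) (T : A -> B) (F : A -> C)
  (LF : seq C) :
  (forall a, P a -> F a \in LF) ->
  (forall a a', P a -> P a' -> F a = F a' -> T a = T a') ->
  exists LT : seq B, (size LT <= size LF)%N /\ forall a, P a -> T a \in LT.
Proof.
move=> hin hinj.
suff [LT [h1 h2]] : exists LT : seq B, (size LT <= size LF)%N /\
    forall a, P a -> F a \in LF -> T a \in LT.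
  by exists LT; split => // a ha; apply: h2 => //; apply: hin.
elim: LF {hin} => [|f LF [LT [h1 h2]]]; first by exists [::].
case: (classic (exists a, P a /\ F a = f)) => [[a0 [ha0 ef]]|hn].
  exists (T a0 :: LT); split => //= a ha; rewrite !inE => /orP [/eqP e|hi].
    by rewrite (hinj a a0) // ?eqxx // ef.
  by rewrite h2 // orbT.
exists LT; split; first by apply: leqW.
move=> a ha; rewrite inE => /orP [/eqP e|hi]; last by apply: h2.
by exfalso; apply: hn; exists a.
Qed.

Lemma size_flatten_le (A : eqType) (B : Type) (s : seq A) (f : A -> seq B) M :
  (forall x, x \in s -> (size (f x) <= M)%N) ->
  (size (flatten (map f s)) <= size s * M)%N.
Proof.
elim: s => [|x s IH] h //=.
rewrite size_cat mulSn leq_add //; first by apply: h; rewrite inE eqxx.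
by apply: IH => y hy; apply: h; rewrite inE hy orbT.
Qed.

Lemma in_flatten_map (A B : eqType) (s : seq A) (f : A -> seq B) x y :
  x \in s -> y \in f x -> y \in flatten (map f s).
Proof. by move=> hx hy; apply/flatten_mapP; exists x. Qed.

Lemma leq_expn2 a b e : (a <= b)%N -> (a ^ e <= b ^ e)%N.
Proof. by move=> h; elim: e => [|e IH] //; rewrite !expnS leq_mul. Qed.

Fixpoint allseqs (j : nat) : seq (seq 'Z_3) :=
  if j is j'.+1 then flatten [seq [seq z :: t | t <- allseqs j'] | z <- enum 'Z_3]
  else [:: [::]].

Lemma size_allseqs j : (size (allseqs j) <= 3 ^ j)%N.
Proof.
elim: j => [|j IH] //=; rewrite expnS.
apply: leq_trans (size_flatten_le (M := (3 ^ j)%N) _) _.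
  by move=> z _; rewrite size_map.
by rewrite size_enum_ord.
Qed.

Lemma mem_allseqs (t : seq 'Z_3) : t \in allseqs (size t).
Proof.
elim: t => [|z t IH]; first by rewrite /= inE.
apply: (@in_flatten_map _ _ _ _ z); first by rewrite mem_enum.
by rewrite map_f.
Qed.

Lemma z3_facts2 (y : 'Z_3) :
  [/\ inJ (y - 1) y, ~~ inJ (y - 1) (y + 1), (y - 1 - y == 0) = false
    & (y - 1 - (y + 1) == 0) = false].
Proof. by move: y; case=> [[|[|[|//]]] ?]. Qed.

Section Cnt.
Variable m : nat.
Implicit Types (om : omseq m) (W : seq (letter m)).

Lemma pattern_of_adm om W : adm 2 om W ->
  exists c a, (a <= size W)%N /\ map fst W = mkpat c a (size W).
Proof.
move=> [hn hs].
have [c [a e]] : exists c a, map fst W = mkpat c a (size (map fst W)).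
  apply: pattern; first exact: noadj_nth hn.
  move=> i hi [e2 e1].
  move eqy: (nth 0 (map fst W) i) e2 e1 => y e2 e1.
  have [f1 f2 f3 f4] := z3_facts2 y.
  have hsec : noadj (map fst (sectL om (y - 1) 0 W)) by case: (hs (y - 1)).
  rewrite map_fst_sectL in hsec.
  rewrite size_map in hi.
  set n := size W.
  have ei : iota 0 n = iota 0 i ++ iota i 3 ++ iota (i + 3) (n - i.+3).
    have en : n = (i + (3 + (n - i.+3)))%N by move: hi; rewrite -/n; lia.
    by rewrite {1}en iotaD add0n iotaD.
  rewrite ei !filter_cat !map_cat /= in hsec.
  rewrite eqy e2 e1 f1 (negbTE f2) /= in hsec.
  have := hsec _ _ _ _ (erefl _).
  have hi1 : (i.+1 < size W)%N by apply: ltnW.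
  rewrite Rp_step // Rp_step; last by apply: ltnW.
  rewrite /fR -!nth_fst eqy e1 f3 f4 !addr0.
  by rewrite eqxx.
exists c, (minn a (size W)); split; first by apply: geq_minr.
by rewrite e size_map -mkpat_min.
Qed.


Fixpoint vals k om (b : Bgrp m) : seq 'Z_3 :=
  if k is k'.+1 then om 0%N b :: vals k' (shift om) b else [::].

Definition code k om W (s : 'Z_3) : 'Z_3 * seq 'Z_3 * seq (seq 'Z_3) :=
  (s, map fst W, map (fun l : letter m => vals k om l.2) W).

Lemma map_snd_sectL (T : Type) (g : Bgrp m -> T) om x R W :
  map (fun l : letter m => g l.2) (sectL om x R W) =
  [seq g (nth (dl m) W j).2 | j <- iota 0 (size W) & inJ x (nth 0 (map fst W) j)].
Proof.
have ef : [seq j <- iota 0 (size W) | inJ x (nth (dl m) W j).1] =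
          [seq j <- iota 0 (size W) | inJ x (nth 0 (map fst W) j)].
  by apply: eq_filter => j; rewrite nth_fst.
by rewrite sectL_eq -map_comp ef.
Qed.

Lemma code_inj k om W W' s s' :
  adm 2 om W -> size W = size W' ->
  s = s' -> map fst W = map fst W' -> amb om W = amb om W' ->
  (forall y, code k (shift om) (sectL om y 0 W) (Rtot om y 0 W) =
             code k (shift om) (sectL om y 0 W') (Rtot om y 0 W')) ->
  code k.+1 om W s = code k.+1 om W' s'.
Proof.
move=> hadm esz es ecl hamb hsec.
rewrite /code es ecl; congr (_, _).
have hsec1 x : map fst (sectL om x 0 W) = map fst (sectL om x 0 W').
  by have := hsec x; rewrite /code => -[].
have hr := determ_r ecl hsec1 hamb.
apply: (@eq_from_nth _ [::]); first by rewrite !size_map.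
move=> i; rewrite size_map => hi.
rewrite (nth_map (dl m)) // (nth_map (dl m)) -?esz //=.
congr (_ :: _); first by apply: hr.
set y := (nth (dl m) W i).1 - 1.
have [f1 _ _ _] := z3_facts2 (nth (dl m) W i).1.
have := hsec y; rewrite /code => -[_ _].
rewrite !(map_snd_sectL (vals k (shift om))) -ecl -esz => /eq_in_map; apply.
by rewrite mem_filter mem_iota hi nth_fst f1.
Qed.

End Cnt.

Fixpoint Ek k : nat := if k is k'.+1 then (1 + 3 * Ek k')%N else 1%N.
Fixpoint Ck k : nat := if k is k'.+1 then (9 * 5103 * Ck k' ^ 3)%N else 9%N.

Definition pats n : seq (seq 'Z_3) :=
  flatten [seq [seq mkpat c a n | a <- iota 0 n.+1] | c <- enum 'Z_3].
Definition T0 n : seq ('Z_3 * seq 'Z_3) :=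
  flatten [seq [seq (s, p) | p <- pats n] | s <- enum 'Z_3].
Definition Amb : seq (seq 'Z_3) := flatten [seq allseqs j | j <- iota 0 7].

Lemma size_T0 n : (size (T0 n) <= 9 * n.+1)%N.
Proof.
apply: leq_trans (size_flatten_le (M := (3 * n.+1)%N) _) _.
  move=> s _; rewrite size_map.
  apply: leq_trans (size_flatten_le (M := n.+1) _) _.
    by move=> c _; rewrite size_map size_iota.
  by rewrite size_enum_ord.
by rewrite size_enum_ord mulnA.
Qed.

Lemma size_Amb : (size Amb <= 5103)%N.
Proof.
apply: leq_trans (size_flatten_le (M := 729) _) _ => //.
move=> j; rewrite mem_iota add0n => /andP [_ hj].
apply: leq_trans (size_allseqs j) _.
have -> : 729%N = (3 ^ 6)%N by [].
by apply: leq_pexp2l.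
Qed.

Lemma in_T0 (s c : 'Z_3) a n : (a <= n)%N -> (s, mkpat c a n) \in T0 n.
Proof.
move=> ha; apply: (@in_flatten_map _ _ _ _ s); first by rewrite mem_enum.
apply/mapP; exists (mkpat c a n) => //.
apply: (@in_flatten_map _ _ _ _ c); first by rewrite mem_enum.
by apply/mapP; exists a => //; rewrite mem_iota.
Qed.

Lemma in_Amb (t : seq 'Z_3) : (size t <= 6)%N -> t \in Amb.
Proof.
move=> h; apply: (@in_flatten_map _ _ _ _ (size t)); last exact: mem_allseqs.
by rewrite mem_iota.
Qed.

Lemma map_constE (A B : Type) (x : B) (s : seq A) : map (fun _ => x) s = nseq (size s) x.
Proof. by elim: s => //= a s ->. Qed.

Section Cover.
Variable m : nat.

Lemma cover_codes k : forall (om : omseq m) n, exists Lst,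
  (size Lst <= Ck k * n.+1 ^ Ek k)%N /\
  forall (W : seq (letter m)) s, adm k.+2 om W -> size W = n -> code k om W s \in Lst.
Proof.
elim: k => [|k IH] om n.
  exists [seq (t.1, t.2, nseq n [::]) | t <- T0 n]; split.
    by rewrite size_map expn1; apply: size_T0.
  move=> W s hadm hsz.
  have [c [a [ha e]]] := pattern_of_adm hadm.
  apply/mapP; exists (s, map fst W); last by rewrite /code /= map_constE hsz.
  by rewrite e hsz; apply: in_T0; rewrite -hsz.
have [f hf] := fchoice (IH (shift om)).
set M := (Ck k * n.+1 ^ Ek k)%N.
have hfM j : (j <= n)%N -> (size (f j) <= M)%N.
  move=> hj; apply: leq_trans (hf j).1 _.
  by rewrite leq_mul // leq_expn2.
pose cnt (y : 'Z_3) (t0 : 'Z_3 * seq 'Z_3) := minn n (count (inJ y) t0.2).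
pose LF := flatten [seq flatten [seq flatten [seq flatten
   [seq [seq (t0, am, u0, u1, u2) | u2 <- f (cnt 2 t0)] | u1 <- f (cnt 1 t0)]
   | u0 <- f (cnt 0 t0)] | am <- Amb] | t0 <- T0 n].
pose P (a : seq (letter m) * 'Z_3) := adm k.+3 om a.1 /\ size a.1 = n.
pose SC (y : 'Z_3) (W : seq (letter m)) :=
  code k (shift om) (sectL om y 0 W) (Rtot om y 0 W).
pose F (a : seq (letter m) * 'Z_3) :=
  ((a.2, map fst a.1), amb om a.1, SC 0 a.1, SC 1 a.1, SC 2 a.1).
have hin : forall a, P a -> F a \in LF.
  move=> [W s] [hadm hsz] /=.
  have hadm2 : adm 2 om W by apply: (adm_leq _ hadm).
  have [c [a [ha e]]] := pattern_of_adm hadm2.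
  have hsec y : SC y W \in f (cnt y (s, map fst W)).
    have -> : cnt y (s, map fst W) = size (sectL om y 0 W).
      rewrite /cnt /= size_sectL count_map; apply/minn_idPr.
      by rewrite -hsz count_size.
    apply: (hf _).2 => //.
    by case: hadm => _ /(_ y).
  apply: (@in_flatten_map _ _ _ _ (s, map fst W)).
    by rewrite e hsz; apply: in_T0; rewrite -hsz.
  apply: (@in_flatten_map _ _ _ _ (amb om W)).
    apply: in_Amb; rewrite size_map size_filter.
    by rewrite e hsz; apply: count_nsandw.
  apply: (@in_flatten_map _ _ _ _ (SC 0 W)); first exact: hsec.
  apply: (@in_flatten_map _ _ _ _ (SC 1 W)); first exact: hsec.
  by apply/mapP; exists (SC 2 W) => //; apply: hsec.
have hinj : forall a a', P a -> P a' -> F a = F a' ->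
    code k.+1 om a.1 a.2 = code k.+1 om a'.1 a'.2.
  move=> [W s] [W' s'] [hadm hsz] [hadm' hsz'] /= hF.
  have [es ecl] : s = s' /\ map fst W = map fst W'.
    by have := congr1 (fun t => t.1.1.1.1) hF => /= -[].
  have hamb : amb om W = amb om W' by have := congr1 (fun t => t.1.1.1.2) hF.
  have h0 : SC 0 W = SC 0 W' by have := congr1 (fun t => t.1.1.2) hF.
  have h1 : SC 1 W = SC 1 W' by have := congr1 (fun t => t.1.2) hF.
  have h2 : SC 2 W = SC 2 W' by have := congr1 (fun t => t.2) hF.
  apply: code_inj => //.
  + by apply: (adm_leq _ hadm).
  + by rewrite hsz hsz'.
  + move=> y; case: (Z3_cases y) => ->; by [apply: h0|apply: h1|apply: h2].
have [LT [hLT hLTin]] := @cover_inj _ _ _ P (fun a => code k.+1 om a.1 a.2) F LF hin hinj.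
exists LT; split; last by move=> W s hadm hsz; apply: (hLTin (W, s)).
apply: leq_trans hLT _.
have hcnt y t0 : (cnt y t0 <= n)%N by apply: geq_minl.
apply: leq_trans (size_flatten_le (M := (size Amb * (M * (M * M)))%N) _) _.
  move=> t0 _.
  apply: leq_trans (size_flatten_le (M := (M * (M * M))%N) _) _; last first.
    by rewrite leq_mul.
  move=> am _.
  apply: leq_trans (size_flatten_le (M := (M * M)%N) _) _; last first.
    by rewrite leq_mul // hfM.
  move=> u0 _; rewrite size_allpairs.
  by rewrite leq_mul // hfM.
apply: leq_trans (leq_mul (size_T0 n) (leq_mul size_Amb (leqnn (M * (M * M))))) _.
have eX : (n.+1 ^ Ek k.+1 = n.+1 * (n.+1 ^ Ek k) ^ 3)%N.
  by rewrite [Ek k.+1]/= expnD expn1 expnM expnAC.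
have eC : Ck k.+1 = (9 * 5103 * Ck k ^ 3)%N by [].
rewrite eX eC /M.
set X := (n.+1 ^ Ek k)%N; set C := Ck k.
rewrite !expnS expn0; apply: eq_leq; lia.
Qed.

End Cover.


Lemma Ek_closed k : (Ek k = (3 ^ k.+1 - 1) %/ 2)%N.
Proof.
have h : (Ek k).*2.+1 = (3 ^ k.+1)%N.
  elim: k => [|k IH] //=; rewrite expnS -IH; lia.
by rewrite -h subn1 /= -muln2 mulnK.
Qed.

Section Final.
Variable m : nat.
Implicit Types (om : omseq m) (W : seq (letter m)).

Lemma nth_vals k om b i : (i < k)%N -> nth 0 (vals k om b) i = om i b.
Proof. by elim: k om i => [|k IH] om [|i] //= hi; rewrite IH. Qed.

Lemma homB om i (x y : Bgrp m) : homP om -> om i (x - y) = om i x - om i y.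
Proof. by move=> h; rewrite -{2}(subrK y x) [om i (x - y + y)]h addrK. Qed.

Lemma code_det om l (W W' : seq (letter m)) s s' : homP om ->
  (forall b : Bgrp m, (forall i, (i <= l)%N -> om i b = 0) -> b = 0) ->
  code l.+1 om W s = code l.+1 om W' s' -> W = W' /\ s = s'.
Proof.
move=> hom hl [es ecl evs]; split => //.
have esz : size W = size W' by rewrite -(size_map fst W) ecl size_map.
apply: (@eq_from_nth _ (dl m)) => // i hi.
have e1 : (nth (dl m) W i).1 = (nth (dl m) W' i).1 by rewrite -!nth_fst ecl.
have e2 : vals l.+1 om (nth (dl m) W i).2 = vals l.+1 om (nth (dl m) W' i).2.
  have := congr1 (fun t => nth [::] t i) evs => /=.
  by rewrite (nth_map (dl m)) // (nth_map (dl m)) // -esz.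
have e3 : (nth (dl m) W i).2 = (nth (dl m) W' i).2.
  apply/eqP; rewrite -subr_eq0; apply/eqP; apply: hl => j hj.
  rewrite homB // -(@nth_vals l.+1 om _ j) // e2 nth_vals //.
  by rewrite subrr.
by move: e1 e3; case: (nth _ W i) => c b; case: (nth _ W' i) => c' b' /= -> ->.
Qed.

End Final.

Unset Implicit Arguments.
Set Strict Implicit.

Theorem mainTheorem2 (m : nat) (om : omseq m)
  (hom : forall i (x y : Bgrp m), om i (x + y) = om i x + om i y)
  (epi : forall i (z : 'Z_3), exists b : Bgrp m, om i b = z)
  (tail_ker : forall (k : nat) (b : Bgrp m),
      (forall i, (k <= i)%N -> om i b = 0) -> b = 0)
  (l : nat)
  (hl : forall b : Bgrp m, (forall i, (i <= l)%N -> om i b = 0) -> b = 0)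
  (hlmin : forall l' : nat, (l' < l)%N ->
      exists b : Bgrp m, b <> 0 /\ forall i, (i <= l')%N -> om i b = 0) :
  exists C : nat, forall n : nat, (1 <= n)%N ->
    card_le (incomp_inf_n om n) (C * n ^ ((3 ^ (l + 2) - 1) %/ 2))%N.
Proof.
set D := ((3 ^ (l + 2) - 1) %/ 2)%N.
have eD : D = Ek l.+1 by rewrite /D Ek_closed addn2.
exists (Ck l.+1 * 2 ^ D)%N => n hn s hP hdist.
have [Lst [hsz hLst]] := cover_codes l.+1 om n.
pose Rel (g : tmap) c := exists W sg, [/\ evalW om W sg =1 g, size W = n,
   adm l.+3 om W & c = code l.+1 om W sg].
have hex g : incomp_inf_n om n g -> exists2 c, c \in Lst & Rel g c.
  move=> [hinf [[L [hL hc]] hmin]].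
  set W := (toNF om L).1; set sg := (toNF om L).2.
  have hW : evalW om W sg =1 g by move=> w; rewrite -toNF_geval hL.
  have hs1 : (size W <= n)%N by rewrite -hc; apply: size_toNF.
  have hs2 : (n <= size W)%N by apply: (wnorm_le hW); split => //; exists L.
  have esz : size W = n by apply/eqP; rewrite eqn_leq hs1 hs2.
  have hadm : adm l.+3 om W.
    apply: (adm_of_incomp (k := l.+3) hom (g := g) (s := sg)) => //.
      by apply: hinf.
    by rewrite esz; split => //; exists L.
  exists (code l.+1 om W sg); first by apply: hLst.
  by exists W, sg.
have huniq g g' c : Rel g c -> Rel g' c -> g =1 g'.
  move=> [W [sg [hW _ _ ->]]] [W' [sg' [hW' _ _ /esym e]]] w.
  have [eW es] := code_det hom hl e.
  by rewrite -hW -hW' eW es.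
have [f hf] : exists f : nat -> 'Z_3 * seq 'Z_3 * seq (seq 'Z_3),
    forall i, (i < size s)%N -> f i \in Lst /\ Rel (nth id s i) (f i).
  apply: (fchoice (P := fun i c => (i < size s)%N -> c \in Lst /\ Rel (nth id s i) c)).
  move=> i; case: (ltnP i (size s)) => hi.
    by have [c hc hr] := hex _ (hP i hi); exists c.
  by exists (0, [::], [::]) => h; exfalso; lia.
have hinj : {in iota 0 (size s) &, injective f}.
  move=> i j; rewrite !mem_iota !add0n => /andP [_ hi] /andP [_ hj] efij.
  have [_ ri] := hf i hi; have [_ rj] := hf j hj.
  rewrite efij in ri.
  have e := huniq _ _ _ ri rj.
  case: (ltngtP i j) => // hij.
    by exfalso; apply: (hdist i j _ e); rewrite hij hj.
  exfalso; apply: (hdist j i); first by rewrite hij hi.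
  by move=> w; rewrite e.
have hcs : (size (map f (iota 0 (size s))) <= size Lst)%N.
  apply: uniq_leq_size; first by rewrite (map_inj_in_uniq hinj) iota_uniq.
  move=> c /mapP [i]; rewrite mem_iota add0n => /andP [_ hi] ->.
  by have [] := hf i hi.
rewrite size_map size_iota in hcs.
apply: leq_trans hcs _; apply: leq_trans hsz _.
rewrite -eD -mulnA leq_mul // -expnMn leq_expn2 //.
by rewrite mul2n -addnn -addn1 leq_add2l.
Qed.
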